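(* Suppose Assumptions 1–4 hold and the scale function is $s(t)=t$ (on $(0,\infty)$) or $s(t)=\exp(t)$ (on $\mathbb{R}$). Let $\theta^*=(\beta^*,\gamma^* )$ be the unique minimizer of $Q$ over $\Theta$. Then $$E\Big[\frac{1}{s(X'\gamma^* )}(Y-X'\beta^* )^2\Big]\le E\big[(Y-X'\beta_{LS})^2\big]^{1/2},$$ with equality if and only if $\theta^*=\theta_{LS}$.
   Context: Let $Y$ be a scalar random variable and $X$ a random $k\times1$ vector whose first component equals $1$; let $\mathcal{X}$ denote the support of $X$. Write $\mu(X)=E[Y\mid X]$ and $\sigma(X)^2=E[(Y-\mu(X))^2\mid X]$. Let $s$ be a positive scale function, write $s_j(t)=\partial^j s(t)/\partial t^j$ for $j=1,2,3$, and set $\Theta_\gamma=\{\gamma\in\mathbb{R}^k:\Pr[s(X'\gamma)>0]=1\}$ and $\Theta=\mathbb{R}^k\times\Theta_\gamma$. For $\theta=(\beta,\gamma)\in\Theta$ put $e(Y,X,\theta)=(Y-X'\beta)/s(X'\gamma)$ and $Q(\theta)=E\big[\tfrac12\{e(Y,X,\theta)^2+1\}s(X'\gamma)\big]$. OLS solution: let $\Theta_{\gamma,LS}=\{\gamma\in\mathbb{R}:s(\gamma)>0\}$ and $(\beta_{LS},\gamma_{LS})=\arg\min_{(\beta,\gamma)\in\mathbb{R}^k\times\Theta_{\gamma,LS}}E\big[\tfrac12\{((Y-X'\beta)/s(\gamma))^2+1\}s(\gamma)\big]$; set $\theta_{LS}=(\beta_{LS},(\gamma_{LS},0_{k-1}))\in\Theta$.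 Assumption 1: for $a=0$ or $a=-\infty$, $s:(a,\infty)\to(0,\infty)$ is three times differentiable, strictly increasing and convex, with $\lim_{t\to a}s(t)=0$ and $\lim_{t\to\infty}s(t)=\infty$. Assumption 2: $x\mapsto\sigma(x)^2$ is bounded away from $0$ uniformly on $\mathcal{X}$. Assumption 3: (i) $E[Y^4]<\infty$ and $E\|X\|^4<\infty$; (ii) for all $\gamma\in\Theta_\gamma$, $E[\|X\|^4s_2(X'\gamma)^2]<\infty$, $E[\|X\|^6s_3(X'\gamma)^2]<\infty$ and $E[\|X\|^6s_1(X'\gamma)^2s_2(X'\gamma)^2]<\infty$. Assumption 4: for all $\gamma\in\Theta_\gamma$, $E[XX'/s(X'\gamma)]$ is nonsingular. *)

(* Defs.v *)
From HB Require Import structures.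
From mathcomp Require Import all_boot all_order all_algebra.
From mathcomp Require Import all_classical all_reals all_analysis.
Set Implicit Arguments. Unset Strict Implicit. Unset Printing Implicit Defensive.
Import Order.TTheory GRing.Theory Num.Theory.
Local Open Scope classical_set_scope.
Local Open Scope ring_scope.

(* Vectors of R^k are k-tuples (measurable with the product sigma-algebra). *)
Definition dotv {R : realType} {k : nat} (x b : k.-tuple R) : R :=
  \sum_(i < k) tnth x i * tnth b i.

Definition nrm2 {R : realType} {k : nat} (x : k.-tuple R) : R :=
  \sum_(i < k) tnth x i ^+ 2.

Inductive scale_kind := LinScale | ExpScale.

(* s and its derivatives s_1, s_2, s_3 (written out explicitly). *)
Definition sc {R : realType} (sk : scale_kind) (t : R) : R :=
  match sk with LinScale => t | ExpScale => expR t end.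
Definition sc1 {R : realType} (sk : scale_kind) (t : R) : R :=
  match sk with LinScale => 1 | ExpScale => expR t end.
Definition sc2 {R : realType} (sk : scale_kind) (t : R) : R :=
  match sk with LinScale => 0 | ExpScale => expR t end.
Definition sc3 {R : realType} (sk : scale_kind) (t : R) : R :=
  match sk with LinScale => 0 | ExpScale => expR t end.

Section defs.
Context {d : measure_display} {T : measurableType d} {R : realType}.
Variable (P : probability T R).

Definition Theta_gamma {k : nat} (sk : scale_kind) (X : T -> k.-tuple R)
    (g : k.-tuple R) : Prop :=
  P [set w | 0 < sc sk (dotv (X w) g)] = 1%E.

Definition Qobj {k : nat} (sk : scale_kind) (Y : T -> R) (X : T -> k.-tuple R)
    (b g : k.-tuple R) : \bar R :=
  'E_P[fun w => 2^-1 * ((((Y w - dotv (X w) b) / sc sk (dotv (X w) g)) ^+ 2 + 1)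
                         * sc sk (dotv (X w) g))].

(* Objective of the OLS problem: scalar scale parameter gamma *)
Definition QLS {k : nat} (sk : scale_kind) (Y : T -> R) (X : T -> k.-tuple R)
    (b : k.-tuple R) (g : R) : \bar R :=
  'E_P[fun w => 2^-1 * ((((Y w - dotv (X w) b) / sc sk g) ^+ 2 + 1) * sc sk g)].

(* m is a version of E[Z | X]: m is Borel on R^k, and for every Borel set B,
   E[Z 1{X in B}] = E[m(X) 1{X in B}] (both integrable). *)
Definition cond_exp_version {k : nat} (Z : T -> R) (X : T -> k.-tuple R)
    (m : k.-tuple R -> R) : Prop :=
  measurable_fun setT m /\
  P.-integrable setT (EFin \o Z) /\
  P.-integrable setT (EFin \o (m \o X)) /\
  forall B : set (k.-tuple R), measurable B ->
    (\int[P]_(w in X @^-1` B) (Z w)%:E = \int[P]_(w in X @^-1` B) (m (X w))%:E)%E.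

Definition support_of {k : nat} (X : T -> k.-tuple R) : set (k.-tuple R) :=
  [set x | forall e : R, 0 < e ->
     (0 < P [set w | forall i, (`|tnth (X w) i - tnth x i| < e)%R])%E].

End defs.

(* gamma_LS embedded in Theta: (gamma_LS, 0_{k-1}) *)
Definition embed_first {R : realType} (k : nat) (g : R) : k.-tuple R :=
  [tuple (if val i == 0%N then g else 0) | i < k].

(* Main.v *)
Require Import Defs.
From HB Require Import structures.
From mathcomp Require Import all_boot all_order all_algebra.
From mathcomp Require Import all_classical all_reals all_analysis.
From mathcomp Require Import measurable_realfun.
From mathcomp Require Import ring lra.
Import Order.TTheory GRing.Theory Num.Theory.
Local Open Scope classical_set_scope.
Local Open Scope ring_scope.

Lemma sum_first {R : realType} k (hk : (0 < k)%N) (x : k.-tuple R) (a : R) :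
  tnth x (Ordinal hk) = 1 ->
  \sum_(i < k) tnth x i * (if val i == 0%N then a else 0) = a.
Proof.
move=> x1; rewrite (bigD1 (Ordinal hk)) //= x1 mul1r big1 ?addr0 //.
move=> i hi; case: eqP => [hi0|]; last by rewrite mulr0.
by exfalso; move/negP: hi; apply; apply/eqP/val_inj => /=.
Qed.

Lemma dotv_embed {R : realType} k (hk : (0 < k)%N) (x : k.-tuple R) (a : R) :
  tnth x (Ordinal hk) = 1 -> dotv x (embed_first k a) = a.
Proof.
move=> x1; rewrite /dotv /embed_first.
under eq_bigr do rewrite tnth_mktuple.
exact: sum_first.
Qed.

Definition gscale {R : realType} {k} (sk : scale_kind) (c : R) (g : k.-tuple R) : k.-tuple R :=
  match sk with
  | LinScale => [tuple c * tnth g i | i < k]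
  | ExpScale => [tuple tnth g i + (if val i == 0%N then ln c else 0) | i < k]
  end.

Lemma gscaleE {R : realType} k (hk : (0 < k)%N) sk (x g : k.-tuple R) (c : R) :
  0 < c -> tnth x (Ordinal hk) = 1 ->
  sc sk (dotv x (gscale sk c g)) = c * sc sk (dotv x g).
Proof.
move=> c0 x1; case: sk; rewrite /sc /gscale /dotv.
- rewrite mulr_sumr; apply: eq_bigr => i _; by rewrite tnth_mktuple mulrCA.
- under eq_bigr do rewrite tnth_mktuple mulrDr.
  rewrite big_split sum_first // expRD lnK; last by rewrite posrE.
  by rewrite mulrC.
Qed.

Definition sinv {R : realType} (sk : scale_kind) (t : R) : R :=
  match sk with LinScale => t | ExpScale => ln t end.

Lemma sinvK {R : realType} sk (t : R) : 0 < t -> sc sk (sinv sk t) = t.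
Proof. by move=> t0; case: sk => //=; rewrite lnK // posrE. Qed.

Lemma qid {R : realType} (y v : R) :
  2^-1 * (((y / v) ^+ 2 + 1) * v) = 2^-1 * (y ^+ 2 / v) + 2^-1 * v.
Proof.
have [->|v0] := eqVneq v 0; first by rewrite !invr0 !mulr0 addr0.
rewrite mulrDl mul1r mulrDr expr_div_n; congr (_ * _ + _).
by rewrite [v ^+ 2]expr2 invfM mulrA mulfVK.
Qed.
Lemma restrictT {d} {T : measurableType d} {R : realType} (P : probability T R)
  (S : set T) (h : T -> \bar R) :
  measurable S -> P S = 1%E -> measurable_fun setT h ->
  (\int[P]_x h x = \int[P]_(x in S) h x)%E.
Proof.
move=> mS PS mh; rewrite [RHS]integral_mkcond.
apply: ae_eq_integral => //.
  by apply/(measurable_restrictT _ mS).1; exact: measurable_funS mh.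
exists (~` S); split.
- exact: measurableC.
- have h1 := @probability_setC _ _ _ P S mS.
  rewrite PS subee // in h1.
- move=> x /= Hx Sx; apply: Hx => _; by rewrite patchE mem_set.
Qed.

Lemma mdot {d} {T : measurableType d} {R : realType} k (X : T -> k.-tuple R) b :
  measurable_fun setT X -> measurable_fun setT (fun w => dotv (X w) b).
Proof.
move=> mX; rewrite /dotv; apply: measurable_sum => i.
apply: measurable_funM => //.
exact: (measurable_fun_tnthP X).1 mX i.
Qed.

Lemma msc {R : realType} sk : measurable_fun setT (@sc R sk).
Proof. by case: sk => /=; [exact: measurable_id | exact: measurable_expR]. Qed.

Lemma measurable_inv (R : realType) : measurable_fun [set: R] (@GRing.inv R).
Proof.
have -> : [set: R] = ~` [set 0] `|` [set 0] by rewrite setUC setUv.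
apply/measurable_funU => //; first exact: measurableC.
split; last exact: measurable_fun_set1.
apply: measurable_realfun.open_continuous_measurable_fun.
  by apply: closed_openC; apply: accessible_closed_set1; apply: hausdorff_accessible; exact: Rhausdorff.
move=> x; rewrite inE /= => /eqP x0; exact: inv_continuous.
Qed.

Lemma mdiv {d} {T : measurableType d} {R : realType} (f g : T -> R) :
  measurable_fun setT f -> measurable_fun setT g ->
  measurable_fun setT (fun w => f w / g w).
Proof.
move=> mf mg; apply: measurable_funM => //.
exact: measurableT_comp (@measurable_inv R) mg.
Qed.

Lemma Qform {d} {T : measurableType d} {R : realType} (P : probability T R)
  (S : set T) (s D : T -> R) (c : R) :
  measurable S -> P S = 1%E -> measurable_fun setT s -> measurable_fun setT D ->
  (forall w, 0 <= D w) -> (forall w, S w -> 0 < s w) -> 0 < c ->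
  ('E_P[fun w => (2^-1 * (D w / (c * s w)) + 2^-1 * (c * s w))%R])%E =
   ((2^-1 / c)%:E * \int[P]_(w in S) (D w / s w)%:E
    + (2^-1 * c)%:E * \int[P]_(w in S) (s w)%:E)%E.
Proof.
move=> mS PS ms mD D0 s0 c0.
have mcs : measurable_fun setT (fun w => c * s w) by apply: measurable_funM.
rewrite unlock (restrictT P S _ mS PS); last first.
  apply/measurable_EFinP; apply: measurable_funD; apply: measurable_funM => //.
  exact: mdiv.
under eq_integral do rewrite EFinD.
rewrite ge0_integralD //; first last.
- by apply/measurable_EFinP; apply: measurable_funM => //; exact: (measurable_funS measurableT (@subsetT _ S) mcs).
- by move=> w Sw; rewrite lee_fin mulr_ge0 // ltW // mulr_gt0 // s0.
- apply/measurable_EFinP; apply: measurable_funM => //; exact: (measurable_funS measurableT (@subsetT _ S) (mdiv _ _ mD mcs)).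
- by move=> w Sw; rewrite lee_fin mulr_ge0 // divr_ge0 // ltW // mulr_gt0 // s0.
congr (_ + _)%E.
- have E1 w : 2^-1 * (D w / (c * s w)) = 2^-1 / c * (D w / s w) by rewrite invfM; ring.
  under eq_integral do rewrite E1 EFinM.
  rewrite ge0_integralZl //.
  + by apply/measurable_EFinP; exact: (measurable_funS measurableT (@subsetT _ S) (mdiv _ _ mD ms)).
  + by move=> w Sw; rewrite lee_fin divr_ge0 // ltW // s0.
  + by rewrite lee_fin divr_ge0 // ltW.
- under eq_integral do rewrite mulrA EFinM.
  rewrite ge0_integralZl //.
  + by apply/measurable_EFinP; exact: (measurable_funS measurableT (@subsetT _ S) ms).
  + by move=> w Sw; rewrite lee_fin ltW // s0.
  + by rewrite lee_fin mulr_ge0 // ltW.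
Qed.
Lemma final_real (R : realType) (a b v t0 : R) (E : Prop) :
  0 <= a -> 0 <= b -> 0 <= v -> 0 < t0 ->
  (forall c, 0 < c -> 2^-1*a + 2^-1*b <= 2^-1/c*a + 2^-1*c*b) ->
  2^-1*a + 2^-1*b <= 2^-1/t0*v + 2^-1*t0 ->
  (forall t, 0 < t -> 2^-1/t0*v + 2^-1*t0 <= 2^-1/t*v + 2^-1*t) ->
  (E -> 2^-1*a + 2^-1*b = 2^-1/t0*v + 2^-1*t0) ->
  (2^-1/t0*v + 2^-1*t0 <= 2^-1*a + 2^-1*b -> E) ->
  a <= Num.sqrt v /\ (a = Num.sqrt v <-> E).
Proof.
move=> a0 b0 v0 t00 Hc Hq Ht HE1 HE2.
have ab : a = b.
  have [bz|bp] := eqVneq b 0.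
    have := Hc 2 (ltr0Sn _ 1); rewrite bz !mulr0 !addr0 => h.
    lra.
  have bp' : 0 < b by rewrite lt_def bp b0.
  set c := (a + b) / (2 * b).
  have c0 : 0 < c by rewrite divr_gt0 // ?mulr_gt0 //; lra.
  have hcb : c * (2 * b) = a + b by rewrite /c mulfVK // mulf_neq0 // ?lt0r_neq0 //; lra.
  have hci : c * c^-1 = 1 by rewrite mulfV // lt0r_neq0.
  have H := Hc c c0.
  have key : c * (2^-1*a+2^-1*b) <= c*(2^-1/c*a + 2^-1*c*b) by rewrite ler_pM2l.
  have e : c * (2^-1/c*a + 2^-1*c*b) = 2^-1*a*(c*c^-1) + 2^-1*c*(c*b) by ring.
  rewrite e hci mulr1 in key.
  have cb : c * b = (a + b) / 2 by rewrite -hcb; field.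
  rewrite cb in key.
  have k2 : c * (a + b) <= 2 * a by lra.
  have k3 : (c * (a + b)) * (2 * b) <= (2 * a) * (2 * b) by rewrite ler_pM2r // mulr_gt0.
  have k4 : (a + b) * (a + b) <= 4 * a * b.
    have e2 : c * (a + b) * (2 * b) = (c * (2 * b)) * (a + b) by ring.
    rewrite e2 hcb in k3; lra.
  apply/eqP; rewrite eq_le; apply/andP; split; nra.
subst b.
have vp : 0 < v.
  rewrite lt_def v0 andbT; apply/negP => /eqP vz.
  have := Ht (t0 / 2); rewrite vz !mulr0 !add0r => h.
  have : 0 < t0 / 2 by rewrite divr_gt0.
  move=> /h; lra.
set sv := Num.sqrt v.
have sv0 : 0 < sv by rewrite sqrtr_gt0.
have vsv : v = sv * sv by rewrite /sv -expr2 sqr_sqrtr.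
have q_le : 2^-1/t0*v + 2^-1*t0 <= sv.
  have e : 2^-1/sv*v = 2^-1*sv.
    by rewrite vsv; field; rewrite lt0r_neq0.
  have := Ht sv sv0; rewrite e => h; lra.
have q_ge : sv <= 2^-1/t0*v + 2^-1*t0.
  rewrite -(ler_pM2l t00).
  have e : t0 * (2^-1/t0*v + 2^-1*t0) = 2^-1*v + 2^-1*t0*t0.
    by field; rewrite lt0r_neq0.
  rewrite e vsv; have h := sqr_ge0 (t0 - sv); rewrite expr2 in h; nra.
set q := 2^-1/t0*v + 2^-1*t0 in Hq HE1 HE2 q_le q_ge *.
split; first lra.
split => [asv|e].
- apply: HE2; lra.
- have := HE1 e; lra.
Qed.

Lemma mpos {d} {T : measurableType d} {R : realType} (f : T -> R) :
  measurable_fun setT f -> measurable [set w | 0 < f w].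
Proof.
move=> mf; have := mf measurableT _ (measurable_itv `]0%R, +oo[); rewrite setTI.
suff -> : [set w | 0 < f w] = f @^-1` `]0%R, +oo[ by [].
by apply/seteqP; split => w /=; rewrite in_itv /= andbT.
Qed.

Lemma Y2fin {d} {T : measurableType d} {R : realType} (P : probability T R) (Y : T -> R) :
  measurable_fun setT Y -> ('E_P[fun w => (Y w ^+ 4)%R] < +oo)%E ->
  ('E_P[fun w => (Y w ^+ 2)%R] < +oo)%E.
Proof.
move=> mY h; rewrite unlock in h *.
apply: (@le_lt_trans _ _ (\int[P]_w ((1 + Y w ^+ 4)%:E))%E).
  apply: ge0_le_integral => //.
  - by move=> w _; rewrite lee_fin sqr_ge0.
  - by apply/measurable_EFinP; apply: measurable_funX.
  - by apply/measurable_EFinP; apply: measurable_funD => //; apply: measurable_funX.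
  - move=> w _; rewrite lee_fin.
    have h1 := sqr_ge0 (Y w ^+ 2 - 1).
    have e : Y w ^+ 4 = Y w ^+ 2 * Y w ^+ 2 by rewrite -exprD.
    rewrite e; nra.
under eq_integral do rewrite EFinD.
have e4 w : Y w ^+ 4 = (Y w ^+ 2) ^+ 2 by rewrite -exprM.
rewrite ge0_integralD //; last 2 first.
- by move=> w _; rewrite lee_fin e4 sqr_ge0.
- by apply/measurable_EFinP; apply: measurable_funX.
rewrite integral_cst // mul1e; set p := (X in (X + _)%E).
have -> : p = 1%E by exact: probability_setT.
by apply: lte_add_pinfty => //; exact: ltry.
Qed.

Lemma fin_from {R : realType} {c : R} {x y : \bar R} : 0 < c -> (0 <= x)%E -> (0 <= y)%E ->
  (c%:E * x + y < +oo)%E -> exists r, x = r%:E /\ 0 <= r.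
Proof.
move=> c0; case: x => [r r0 _ _|_ y0|//]; first by exists r; rewrite -lee_fin.
rewrite gt0_muley ?lte_fin // addye ?ltxx //.
by case: y y0.
Qed.

Theorem corollary1 (d : measure_display) (T : measurableType d) (R : realType)
  (P : probability T R) (k : nat) (hk : (0 < k)%N)
  (Y : T -> R) (X : T -> k.-tuple R) (sk : scale_kind)
  (mY : measurable_fun setT Y) (mX : measurable_fun setT X)
  (X1 : forall w, tnth (X w) (Ordinal hk) = 1)
  (* Assumption 2 *)
  (A2 : exists (mu sig2 : k.-tuple R -> R) (c : R),
      cond_exp_version P Y X mu /\
      cond_exp_version P (fun w => (Y w - mu (X w)) ^+ 2) X sig2 /\
      0 < c /\ forall x, support_of P X x -> c <= sig2 x)
  (* Assumption 3 (i) *)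
  (A3Y : ('E_P[fun w => (Y w ^+ 4)%R] < +oo)%E)
  (A3X : ('E_P[fun w => (nrm2 (X w) ^+ 2)%R] < +oo)%E)
  (* Assumption 3 (ii) *)
  (A3s : forall g, Theta_gamma P sk X g ->
     ('E_P[fun w => (nrm2 (X w) ^+ 2 * sc2 sk (dotv (X w) g) ^+ 2)%R] < +oo)%E /\
     ('E_P[fun w => (nrm2 (X w) ^+ 3 * sc3 sk (dotv (X w) g) ^+ 2)%R] < +oo)%E /\
     ('E_P[fun w => (nrm2 (X w) ^+ 3 * sc1 sk (dotv (X w) g) ^+ 2
                     * sc2 sk (dotv (X w) g) ^+ 2)%R] < +oo)%E)
  (* Assumption 4 *)
  (A4 : forall g, Theta_gamma P sk X g ->
     (forall i j : 'I_k, P.-integrable setT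
        (fun w => (tnth (X w) i * tnth (X w) j / sc sk (dotv (X w) g))%:E)) /\
     (\matrix_(i < k, j < k)
        fine ('E_P[fun w => (tnth (X w) i * tnth (X w) j / sc sk (dotv (X w) g))%R])%E)
       \in unitmx)
  (* theta* = (bs, gs) is the unique minimizer of Q over Theta *)
  (bs gs : k.-tuple R)
  (Hs_in : Theta_gamma P sk X gs)
  (Hs_min : forall b g, Theta_gamma P sk X g -> (b, g) <> (bs, gs) ->
     (Qobj P sk Y X bs gs < Qobj P sk Y X b g)%E)
  (* (bLS, gLS) minimizes the OLS objective *)
  (bLS : k.-tuple R) (gLS : R)
  (HLS_in : 0 < sc sk gLS)
  (HLS_min : forall b g, 0 < sc sk g -> (QLS P sk Y X bLS gLS <= QLS P sk Y X b g)%E) :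
  ('E_P[fun w => ((Y w - dotv (X w) bs) ^+ 2 / sc sk (dotv (X w) gs))%R]
     <= sqrte 'E_P[fun w => ((Y w - dotv (X w) bLS) ^+ 2)%R])%E /\
  (('E_P[fun w => ((Y w - dotv (X w) bs) ^+ 2 / sc sk (dotv (X w) gs))%R]
     = sqrte 'E_P[fun w => ((Y w - dotv (X w) bLS) ^+ 2)%R])%E
   <-> (bs, gs) = (bLS, embed_first k gLS)).
Proof.
have X1' : forall w, tnth (X w) (Ordinal hk) = 1 := X1.
have Qle : forall b g, Theta_gamma P sk X g ->
    (Qobj P sk Y X bs gs <= Qobj P sk Y X b g)%E.
  move=> b g hg; have [e|ne] := eqVneq (b, g) (bs, gs).
    by case: e => -> ->.
  by apply/ltW/Hs_min => //; exact/eqP.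
have Th_emb : Theta_gamma P sk X (embed_first k gLS).
  rewrite /Theta_gamma.
  have -> : [set w | 0 < sc sk (dotv (X w) (embed_first k gLS))] = setT.
    by apply/seteqP; split => w //= _; rewrite (dotv_embed _ hk) //.
  exact: probability_setT.
have QE : Qobj P sk Y X bLS (embed_first k gLS) = QLS P sk Y X bLS gLS.
  rewrite /Qobj /QLS; congr (expectation P _); apply/funext => w.
  by rewrite (dotv_embed _ hk).
have HE1 : (bs, gs) = (bLS, embed_first k gLS) ->
    Qobj P sk Y X bs gs = QLS P sk Y X bLS gLS.
  by case=> -> ->.
have HE2 : (QLS P sk Y X bLS gLS <= Qobj P sk Y X bs gs)%E ->
    (bs, gs) = (bLS, embed_first k gLS).
  move=> h; have [e|ne] := eqVneq (bLS, embed_first k gLS) (bs, gs); first by rewrite e.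
  have := Hs_min _ _ Th_emb (elimN eqP ne); rewrite QE => h2.
  by have := lt_le_trans h2 h; rewrite ltxx.
have HLS : forall b g, 0 < sc sk g ->
    QLS P sk Y X b g = ((2^-1 / sc sk g)%:E * 'E_P[fun w => ((Y w - dotv (X w) b) ^+ 2)%R]
                        + (2^-1 * sc sk g)%:E)%E.
  move=> b g g0.
  have mDb : measurable_fun setT (fun w => (Y w - dotv (X w) b) ^+ 2).
    by apply: measurable_funX; apply: measurable_funB => //; exact: mdot.
  have := Qform P setT (fun=> 1) (fun w => (Y w - dotv (X w) b) ^+ 2) (sc sk g)
    measurableT (probability_setT P) (measurable_cst _) mDb
    (fun w => sqr_ge0 _) (fun w _ => ltr01) g0.
  rewrite /QLS.
  have -> : (fun w => 2^-1 * ((((Y w - dotv (X w) b) / sc sk g) ^+ 2 + 1) * sc sk g)) =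
            (fun w => 2^-1 * ((Y w - dotv (X w) b) ^+ 2 / (sc sk g * 1)) + 2^-1 * (sc sk g * 1)).
    by apply/funext => w; rewrite qid mulr1.
  move=> ->; congr (_ * _ + _)%E.
  - rewrite unlock; apply: eq_integral => w _; by rewrite divr1.
  - rewrite integral_cst // mul1e; set p := (X in (_ * X)%E).
    have -> : p = 1%E by exact: probability_setT.
    by rewrite mule1.
have HLSfin : (QLS P sk Y X bLS gLS < +oo)%E.
  apply: (le_lt_trans (HLS_min (embed_first k 0) (sinv sk 1) _)).
    by rewrite sinvK // ltr01.
  rewrite HLS ?sinvK ?ltr01 //.
  have -> : (fun w => (Y w - dotv (X w) (embed_first k 0)) ^+ 2) = (fun w => Y w ^+ 2).
    by apply/funext => w; rewrite (dotv_embed _ hk) // subr0.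
  apply: lte_add_pinfty; last exact: ltry.
  apply: lte_mul_pinfty => //; try (by rewrite lee_fin divr_ge0).
  exact: Y2fin.
set V := ('E_P[fun w => ((Y w - dotv (X w) bLS) ^+ 2)%R])%E.
have V0 : (0 <= V)%E by rewrite /V unlock; apply: integral_ge0 => w _; rewrite lee_fin sqr_ge0.
set s := fun w => sc sk (dotv (X w) gs).
have ms : measurable_fun setT s.
  exact: (measurableT_comp (msc sk) (mdot _ _ _ mX)).
set S := [set w | 0 < s w].
have mS : measurable S by exact: mpos.
have PS : P S = 1%E by exact: Hs_in.
set D := fun w => (Y w - dotv (X w) bs) ^+ 2.
have mD : measurable_fun setT D.
  by apply: measurable_funX; apply: measurable_funB => //; exact: mdot.
set A := (\int[P]_(w in S) (D w / s w)%:E)%E.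
set B := (\int[P]_(w in S) (s w)%:E)%E.
have A0 : (0 <= A)%E.
  by apply: integral_ge0 => w Sw; rewrite lee_fin divr_ge0 // ?sqr_ge0 // ltW.
have B0 : (0 <= B)%E.
  by apply: integral_ge0 => w Sw; rewrite lee_fin ltW.
have HQc : forall c g, 0 < c -> (forall w, sc sk (dotv (X w) g) = c * s w) ->
    Qobj P sk Y X bs g = ((2^-1 / c)%:E * A + (2^-1 * c)%:E * B)%E.
  move=> c g c0 hg.
  rewrite -(Qform P S s D c mS PS ms mD (fun w => sqr_ge0 _) (fun w Sw => Sw) c0).
  rewrite /Qobj; congr (expectation P _); apply/funext => w.
  by rewrite hg qid.
have HQ1 : Qobj P sk Y X bs gs = ((2^-1)%:E * A + (2^-1)%:E * B)%E.
  by rewrite (HQc 1 gs ltr01) ?divr1 ?mulr1 // => w; rewrite mul1r.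
have Thc : forall c, 0 < c -> Theta_gamma P sk X (gscale sk c gs).
  move=> c c0; rewrite /Theta_gamma.
  have -> : [set w | 0 < sc sk (dotv (X w) (gscale sk c gs))] = S.
    apply/seteqP; split => w /=; rewrite (gscaleE _ hk) // pmulr_rgt0 //.
  exact: PS.
have F1 : forall c, 0 < c -> ((2^-1)%:E * A + (2^-1)%:E * B <=
                              (2^-1 / c)%:E * A + (2^-1 * c)%:E * B)%E.
  move=> c c0; rewrite -HQ1 -(HQc c (gscale sk c gs)) //.
    by apply: Qle; exact: Thc.
  by move=> w; rewrite (gscaleE _ hk).
have LHS : ('E_P[fun w => ((Y w - dotv (X w) bs) ^+ 2 / sc sk (dotv (X w) gs))%R])%E = A.
  rewrite unlock (restrictT P S _ mS PS) //.
  by apply/measurable_EFinP; exact: mdiv.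
rewrite LHS.
set t0 := sc sk gLS.
have F2 : ((2^-1)%:E * A + (2^-1)%:E * B <= (2^-1 / t0)%:E * V + (2^-1 * t0)%:E)%E.
  rewrite -HQ1 -HLS // -QE; exact: Qle.
have F3 : forall t, 0 < t -> ((2^-1 / t0)%:E * V + (2^-1 * t0)%:E <=
                              (2^-1 / t)%:E * V + (2^-1 * t)%:E)%E.
  move=> t t1; have := HLS_min bLS (sinv sk t); rewrite sinvK // => h.
  have h2 := h t1.
  by rewrite (HLS _ gLS) // (HLS _ (sinv sk t)) ?sinvK // in h2.
have F4 : (bs, gs) = (bLS, embed_first k gLS) ->
    ((2^-1)%:E * A + (2^-1)%:E * B = (2^-1 / t0)%:E * V + (2^-1 * t0)%:E)%E.
  by move=> e; rewrite -HQ1 -HLS // HE1.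
have F5 : ((2^-1 / t0)%:E * V + (2^-1 * t0)%:E <= (2^-1)%:E * A + (2^-1)%:E * B)%E ->
    (bs, gs) = (bLS, embed_first k gLS).
  by rewrite -HQ1 -HLS //.
have Ffin : ((2^-1 / t0)%:E * V + (2^-1 * t0)%:E < +oo)%E by rewrite -HLS.
have Qfin := le_lt_trans F2 Ffin.
have c1 : 0 < 2^-1 / t0 :> R by rewrite divr_gt0 // invr_gt0.
have c2 : 0 < 2^-1 :> R by rewrite invr_gt0.
have [v [Vv v0]] : exists r, V = r%:E /\ 0 <= r.
  have y0 : (0 <= (2^-1 * t0)%:E)%E by rewrite lee_fin mulr_ge0 // ltW.
  exact: (fin_from c1 V0 y0 Ffin).
have [a [Aa a0]] : exists r, A = r%:E /\ 0 <= r.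
  apply: (fin_from c2 A0 _ Qfin); rewrite mule_ge0 // lee_fin ltW //.
have [b [Bb b0]] : exists r, B = r%:E /\ 0 <= r.
  apply: (fin_from c2 B0 (x := B) (y := ((2^-1)%:E * A)%E)); first by rewrite mule_ge0 // lee_fin ltW.
  by rewrite addeC.
rewrite Aa Bb Vv in F1 F2 F3 F4 F5 *.
have G1 : forall c, 0 < c -> 2^-1*a + 2^-1*b <= 2^-1/c*a + 2^-1*c*b.
  by move=> c c0; have := F1 c c0; rewrite -!EFinM -!EFinD lee_fin.
have G2 : 2^-1*a + 2^-1*b <= 2^-1/t0*v + 2^-1*t0.
  by move: F2; rewrite -!EFinM -!EFinD lee_fin.
have G3 : forall t, 0 < t -> 2^-1/t0*v + 2^-1*t0 <= 2^-1/t*v + 2^-1*t.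
  by move=> t t1; have := F3 t t1; rewrite -!EFinM -!EFinD lee_fin.
have G4 : (bs, gs) = (bLS, embed_first k gLS) -> 2^-1*a + 2^-1*b = 2^-1/t0*v + 2^-1*t0.
  by move=> e; have := F4 e; rewrite -!EFinM -!EFinD; apply: EFin_inj.
have G5 : 2^-1/t0*v + 2^-1*t0 <= 2^-1*a + 2^-1*b -> (bs, gs) = (bLS, embed_first k gLS).
  by move=> h; apply: F5; rewrite -!EFinM -!EFinD lee_fin.
have [h1 h2] := @final_real R a b v t0 _ a0 b0 v0 HLS_in G1 G2 G3 G4 G5.
split; first by rewrite /= lee_fin.
split => [e|e].
  by apply/h2; apply: EFin_inj; rewrite e.
by rewrite /= -(proj2 h2 e).
Qed.
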